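(* Let $\mathcal S\in\Sigma^n$ be a string and $\pi:[n]\to[n]$ be an order-preserving permutation for $\mathcal S$. Let $i>1$ be an irreducible $\mathrm{LPF}_\pi$ position. Then, for every $j>1$ with $\pi(j-1)<\pi(i-1)$ and $\mathrm{rlce}(i,j)=\mathrm{LPF}_\pi[i]$, it holds that $\mathcal S[i-1]\ne\mathcal S[j-1]$.
   Context: For $i\ne j$, $\mathrm{rlce}(i,j)$ is the length of the longest common prefix of $\mathcal S[i,n]$ and $\mathcal S[j,n]$. A permutation $\pi:[n]\to[n]$ is order-preserving for $\mathcal S$ if for all $i,j\in[n-1]$, $\pi(i)<\pi(j)$ and $\mathcal S[i,i+1]=\mathcal S[j,j+1]$ imply $\pi(i+1)<\pi(j+1)$. $\mathrm{LPF}_\pi[i]=0$ if $\pi(i)=1$, else $\mathrm{LPF}_\pi[i]=\max_{\pi(j)<\pi(i)}\mathrm{rlce}(j,i)$. A position $i\in[n]$ is an irreducible $\mathrm{LPF}_\pi$ position if $i=1$ or $\mathrm{LPF}_\pi[i]\ne\mathrm{LPF}_\pi[i-1]-1$. *)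

(* Defs.v *)
(* Strings are 1-indexed: S : seq T, n = size S, S[k] = nth S (k-1). *)
From mathcomp Require Import all_boot.
Set Implicit Arguments. Unset Strict Implicit. Unset Printing Implicit Defensive.

Section Defs.
Variable T : eqType.

Fixpoint lcp (s t : seq T) : nat :=
  match s, t with
  | x :: s', y :: t' => if x == y then (lcp s' t').+1 else 0
  | _, _ => 0
  end.

Definition chr (S : seq T) (k : nat) : option T := onth S k.-1.

Definition substr (S : seq T) (i j : nat) : seq T := take (j.+1 - i) (drop i.-1 S).

Definition rlce (S : seq T) (i j : nat) : nat := lcp (drop i.-1 S) (drop j.-1 S).

Definition is_perm_n (n : nat) (pi : nat -> nat) : Prop :=
  (forall i, 1 <= i <= n -> 1 <= pi i <= n) /\
  (forall i j, 1 <= i <= n -> 1 <= j <= n -> pi i = pi j -> i = j).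

Definition order_preserving (S : seq T) (pi : nat -> nat) : Prop :=
  is_perm_n (size S) pi /\
  forall i j, 1 <= i <= (size S).-1 -> 1 <= j <= (size S).-1 ->
    pi i < pi j -> substr S i i.+1 = substr S j j.+1 -> pi i.+1 < pi j.+1.

Definition LPF (S : seq T) (pi : nat -> nat) (i : nat) : nat :=
  if pi i == 1 then 0
  else \max_(j < (size S).+1 | (0 < j) && (pi j < pi i)) rlce S j i.

(* irreducible: i = 1 or LPF[i] <> LPF[i-1] - 1 (integer subtraction,
   written as LPF[i] + 1 <> LPF[i-1] to avoid truncated nat subtraction) *)
Definition irreducible_LPF (S : seq T) (pi : nat -> nat) (i : nat) : bool :=
  (1 <= i <= size S) && ((i == 1) || ((LPF S pi i).+1 != LPF S pi i.-1)).

End Defs.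

(* Main.v *)
Require Import Defs.
From mathcomp Require Import all_boot.
From mathcomp Require Import zify.

Lemma lcp_sym {T : eqType} (s t : seq T) : lcp s t = lcp t s.
Proof.
elim: s t => [|x s IH] [|y t] //=.
by rewrite eq_sym IH; case: eqP => // ->.
Qed.

Lemma lcp_ge1 {T : eqType} {s t : seq T} : 0 < lcp s t ->
  exists x s' t', [/\ s = x :: s', t = x :: t' & lcp s t = (lcp s' t').+1].
Proof.
case: s => [|x s]; case: t => [|y t] //=.
case: eqP => // <- _. by exists x, s, t.
Qed.

Lemma drop_succ {T : Type} {s u : seq T} {a x} : drop a s = x :: u -> drop a.+1 s = u.
Proof. by move=> H; rewrite -add1n -drop_drop H /= drop0. Qed.

Lemma drop_onth {T : Type} {s : seq T} {a x} : onth s a = Some x -> drop a s = x :: drop a.+1 s.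
Proof.
elim: s a => [|y s IH] [|a] //=; first by case=> ->; rewrite drop0.
exact: IH.
Qed.

Theorem lemma14 (T : eqType) (S : seq T) (pi : nat -> nat) (i : nat) :
  order_preserving S pi ->
  1 < i -> irreducible_LPF S pi i ->
  forall j, 1 < j <= size S ->
    pi j.-1 < pi i.-1 ->
    rlce S i j = LPF S pi i ->
    chr S i.-1 != chr S j.-1.
Proof.
move=> [[Hpr Hpinj] Hop] Hi1 /andP[/andP[Hi0 Hin] Hirr] j /andP[Hj1 Hjn] Hpj Hr.
apply/negP => /eqP Hc.
have Hirr' : (LPF S pi i).+1 != LPF S pi i.-1.
  by case/orP: Hirr => [/eqP Hi|//]; exfalso; lia.
move: Hc; rewrite /chr.
case Ex: (onth S i.-1.-1) => [x|]; last first.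
  by have := onthTE S i.-1.-1; rewrite Ex /= => /esym/negbT; rewrite -leqNgt; lia.
move=> /esym Ey.
have Hdi := drop_onth Ex.
have Hdj := drop_onth Ey.
have P1 : 0 < i.-1 by lia.
have Hpj1 : 1 <= pi j.-1 by have := Hpr j.-1; lia.
have Hpi1 : pi i.-1 == 1 = false by apply/eqP; lia.
have Hlow : rlce S j.-1 i.-1 = (LPF S pi i).+1.
  rewrite -Hr /rlce Hdi Hdj /= eqxx lcp_sym.
  have P2 : 0 < j.-1 by lia.
  by rewrite (prednK P1) (prednK P2).
have L1 : (LPF S pi i).+1 <= LPF S pi i.-1.
  rewrite -Hlow /LPF Hpi1.
  have Hj' : j.-1 < (size S).+1 by lia.
  apply: (leq_bigmax_cond (F := fun k : 'I_(size S).+1 => rlce S k i.-1) (Ordinal Hj')).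
  by rewrite /=; apply/andP; split => //; lia.
have L2 : LPF S pi i.-1 <= (LPF S pi i).+1.
  rewrite /LPF Hpi1.
  apply/bigmax_leqP => k /andP[Hk0 Hpk].
  case: (leqP (rlce S k i.-1) 1) => [H|H2]; first by lia.
  move: H2; rewrite /rlce => H2.
  have [x1 [u1 [v1 [E1 E2 E3]]]] := lcp_ge1 (ltnW H2).
  move: H2; rewrite E3 ltnS => H2.
  have [y1 [u2 [v2 [F1 F2 F3]]]] := lcp_ge1 H2.
  have Hsz : k.+1 <= size S.
    have := congr1 size E1; rewrite F1 size_drop /=; lia.
  have Hk1 : drop k S = u1.
    by have := drop_succ E1; rewrite (ltn_predK Hk0).
  have Hi2 : drop i.-1 S = v1.
    by have := drop_succ E2; rewrite (prednK P1).
  have Hpk1 : pi k.+1 < pi i.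
    have := Hop k i.-1.
    rewrite (ltn_predK Hi1); apply => //; try lia.
    rewrite /substr. have -> : k.+2 - k = 2 by lia. have -> : i.+1 - i.-1 = 2 by lia.
    by rewrite E1 E2 F1 F2 /= !take0.
  have Hpi1' : pi i == 1 = false.
    apply/eqP; have := Hpr k.+1; lia.
  rewrite Hpi1' ltnS.
  have Hk' : k.+1 < (size S).+1 by lia.
  have := leq_bigmax_cond (F := fun k : 'I_(size S).+1 => rlce S k i) (P := fun j : 'I_(size S).+1 => (0 < j) && (pi j < pi i)) (Ordinal Hk').
  rewrite /= /rlce /= Hk1 Hi2 Hpk1; apply => //.
by move/eqP: Hirr'; apply; apply/eqP; rewrite eqn_leq L1 L2.
Qed.
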